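(* Let $X$ be any quasi-compact Noetherian topological space and $f\colon X\to X$ any continuous map. Then for any finite open cover $\mathfrak U$ of $X$ and any $\epsilon>0$ there is $C>0$ such that \[ N(\mathfrak U_n)\le C(1+\epsilon)^n\quad\text{for all } n, \] where $\mathfrak U_n=\mathfrak U\vee f^{-1}\mathfrak U\vee\dots\vee f^{-(n-1)}\mathfrak U$. In particular $h_{\mathrm{top}}(f)=0$.
   Context: A topological space is Noetherian if every decreasing sequence of closed subsets is eventually stationary. For finite covers $\mathfrak U=\{U_i\},\mathfrak V=\{V_j\}$, $\mathfrak U\vee\mathfrak V=\{U_i\cap V_j\}$, and $N(\mathfrak U)$ is the minimal number of members of $\mathfrak U$ needed to cover $X$. $h_{\mathrm{top}}(f)=\sup_{\mathfrak U}\lim_n\frac1n\log N(\mathfrak U_n)$ over finite open covers. *)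

(* Defs.v *)
From HB Require Import structures.
From mathcomp Require Import all_boot all_order all_algebra.
From mathcomp Require Import all_classical all_reals all_analysis.
Set Implicit Arguments. Unset Strict Implicit. Unset Printing Implicit Defensive.
Import Order.TTheory GRing.Theory Num.Theory.
Local Open Scope classical_set_scope.
Local Open Scope ring_scope.

Definition noetherian (X : topologicalType) : Prop :=
  forall F : nat -> set X, (forall n, closed (F n)) ->
    (forall n, F n.+1 `<=` F n) ->
    exists m, forall n, (m <= n)%N -> F n = F m.

Definition quasi_compact (X : topologicalType) : Prop := compact [set: X].

Definition is_cover (X : Type) (U : seq (set X)) : Prop :=
  \bigcup_(i in [set i | (i < size U)%N]) nth set0 U i = [set: X].

Definition finite_open_cover (X : topologicalType) (U : seq (set X)) : Prop :=
  (forall i, (i < size U)%N -> open (nth set0 U i)) /\ is_cover U.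

Definition cover_join (X : Type) (U V : seq (set X)) : seq (set X) :=
  [seq A `&` B | A <- U, B <- V].

Definition cover_preimage (X : Type) (g : X -> X) (U : seq (set X)) : seq (set X) :=
  [seq g @^-1` A | A <- U].

Definition cover_n (X : Type) (f : X -> X) (U : seq (set X)) (n : nat) : seq (set X) :=
  foldr (@cover_join X) [:: [set: X]]
        [seq cover_preimage (iter k f) U | k <- iota 0 n].

Definition Ncov (X : Type) (U : seq (set X)) : nat :=
  \big[minn/size U]_(I : {set 'I_(size U)} |
      `[< \bigcup_(i in [set i | i \in I]) nth set0 U i = [set: X] >]) #|I|.

Definition htop (R : realType) (X : topologicalType) (f : X -> X) : \bar R :=
  ereal_sup [set (limn (fun n : nat =>
                   ((ln (Ncov (cover_n f U n))%:R : R) / n%:R)%:E))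
            | U in [set U | finite_open_cover U]].

(* Main.v *)
Require Import Defs.
From HB Require Import structures.
From mathcomp Require Import all_boot all_order all_algebra.
From mathcomp Require Import all_classical all_reals all_analysis.
From mathcomp Require Import ring lra.
Set Implicit Arguments. Unset Strict Implicit. Unset Printing Implicit Defensive.
Import Order.TTheory GRing.Theory Num.Theory numFieldNormedType.Exports.
Local Open Scope classical_set_scope.

Section Subshift.
Variable A : finType.
Local Notation sq := (nat -> A).

Definition agree n (u v : sq) := forall k, (k < n)%N -> u k = v k.
Definition shs (u : sq) : sq := fun k => u k.+1.
Definition shn a (u : sq) : sq := fun k => u (a + k)%N.
Definition closedS (P : set sq) :=
  forall u, (forall n, exists v, P v /\ agree n u v) -> P u.
Definition invS (P : set sq) := forall u, P u -> P (shs u).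
Definition pre n (u : sq) : {ffun 'I_n -> A} := [ffun i => u (nat_of_ord i)].
Definition Lang n (P : set sq) : {set {ffun 'I_n -> A}} :=
  [set w | `[< exists u, P u /\ pre n u = w >]].
Definition pc (P : set sq) n := #|Lang n P|.
Definition iso (P : set sq) u := exists n, forall v, P v -> agree n u v -> v = u.
Definition der (P : set sq) : set sq := [set u | P u /\ ~ iso P u].

Lemma agree_sym n u v : agree n u v -> agree n v u.
Proof. by move=> h k kn; rewrite h. Qed.

Lemma agree_trans n u v w : agree n u v -> agree n v w -> agree n u w.
Proof. by move=> h1 h2 k kn; rewrite h1 // h2. Qed.

Lemma agree_le n n' u v : (n <= n')%N -> agree n' u v -> agree n u v.
Proof. by move=> le h k kn; apply: h; exact: leq_trans kn le. Qed.

Lemma pre_agree n u v : pre n u = pre n v <-> agree n u v.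
Proof.
split=> [e k kn|h]; last by apply/ffunP => i; rewrite !ffunE h.
by have := congr1 (fun g : {ffun 'I_n -> A} => g (Ordinal kn)) e; rewrite !ffunE.
Qed.

Lemma inLang n P w : (w \in Lang n P) <-> exists u, P u /\ pre n u = w.
Proof. by rewrite inE; split=> /asboolP. Qed.

Lemma preLang n P u : P u -> pre n u \in Lang n P.
Proof. by move=> Pu; apply/inLang; exists u. Qed.

Lemma Lang_sub n (P Q : set sq) : P `<=` Q -> Lang n P \subset Lang n Q.
Proof.
by move=> PQ; apply/fintype.subsetP => w /inLang [u [Pu <-]]; apply: preLang; apply: PQ.
Qed.

Lemma pc_sub n (P Q : set sq) : P `<=` Q -> (pc P n <= pc Q n)%N.
Proof. by move=> PQ; apply: subset_leq_card; exact: Lang_sub. Qed.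

Lemma invS_shn P a u : invS P -> P u -> P (shn a u).
Proof.
move=> iP Pu; elim: a => [|a IH].
  by have -> : shn 0 u = u by apply: funext => k; rewrite /shn add0n.
have -> : shn a.+1 u = shs (shn a u) by apply: funext => k; rewrite /shn /shs addnS.
exact: iP.
Qed.

Lemma der_sub P : der P `<=` P.
Proof. by move=> u []. Qed.

Lemma der_closed P : closedS P -> closedS (der P).
Proof.
move=> cP u h; split.
  apply: cP => n; have [v [[Pv _] avu]] := h n; by exists v.
move=> [n isn].
have [v [[Pv niv] auv]] := h n.
apply: niv; exists n => w Pw avw.
have e1 := isn w Pw (agree_trans auv avw).
have e2 := isn v Pv auv.
by rewrite e1 e2.
Qed.

Lemma der_inv P : invS P -> invS (der P).
Proof.
move=> iP u [Pu niu]; split; first exact: iP.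
move=> [n isn]; apply: niu; exists n.+1 => v Pv auv.
have e := isn (shs v) (iP _ Pv).
have : shs u = shs v.
  by apply/esym/e => k kn; apply: auv.
move=> esh; apply: funext => k; case: k => [|k].
  by apply/esym/auv.
by have := congr1 (fun g => g k) esh; rewrite /shs => ->.
Qed.

Fixpoint kseq (step : nat -> sq -> sq) n0 u0 k : sq :=
  if k is k'.+1 then step (n0 + k')%N (kseq step n0 u0 k') else u0.

Lemma konig (G : nat -> sq -> Prop) n0 u0 :
  (forall j u v, G j u -> agree j u v -> G j v) ->
  (forall j u, (n0 <= j)%N -> G j u -> exists v, agree j u v /\ G j.+1 v) ->
  G n0 u0 -> exists w, agree n0 u0 w /\ forall j, (n0 <= j)%N -> G j w.
Proof.
move=> Gag Gst G0.
pose step j u := if pselect (exists v, agree j u v /\ G j.+1 v) is left H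
  then proj1_sig (cid H) else u.
pose s := kseq step n0 u0.
have c1 k : G (n0 + k)%N (s k) /\ agree (n0 + k)%N (s k) (s k.+1).
  elim: k => [|k [Gk _]].
    rewrite addn0; split => //.
    rewrite /s /= /step addn0; case: pselect => [H|H].
      by case: (cid H) => v [] /=.
    by case: H; apply: Gst.
  have Gk1 : G (n0 + k.+1)%N (s k.+1).
    rewrite /s /= /step; case: pselect => [H|H].
      by case: (cid H) => v [] /= _; rewrite addnS.
    by case: H; apply: Gst => //; exact: leq_addr.
  split => //.
  rewrite {2}/s /= /step; case: pselect => [H|H].
    by case: (cid H) => v [] /=.
  by case: H; apply: Gst => //; exact: leq_addr.
have c2 k d : agree (n0 + k)%N (s k) (s (k + d)%N).
  elim: d => [|d IH]; first by rewrite addn0.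
  apply: agree_trans IH _; rewrite addnS.
  apply: (agree_le (n' := (n0 + (k + d))%N)); first by rewrite leq_add2l leq_addr.
  exact: (c1 (k + d)%N).2.
pose w i := s i.+1 i.
have c3 k : agree (n0 + k)%N (s k) w.
  move=> i ik; rewrite /w.
  have [le|lt] := leqP k i.+1.
    have := c2 k (i.+1 - k)%N; rewrite subnKC //; exact.
  have := c2 i.+1 (k - i.+1)%N; rewrite subnKC; last exact: ltnW.
  move=> h; rewrite h //; last by rewrite addnC ltn_addr.
have Gw j : (n0 <= j)%N -> G j w.
  move=> nj; rewrite -(subnKC nj); apply: Gag (c3 _).
  exact: (c1 _).1.
exists w; split => //.
by have := c3 0; rewrite addn0 /s.
Qed.

Definition catf a c (u : {ffun 'I_a -> A}) (v : {ffun 'I_c -> A}) :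
    {ffun 'I_(a + c) -> A} :=
  [ffun i : 'I_(a + c) => match fintype.split i with inl j => u j | inr j => v j end].

Lemma pre_cat a c u : pre (a + c) u = catf (pre a u) (pre c (shn a u)).
Proof.
apply/ffunP => i; rewrite !ffunE; case: splitP => j ->; rewrite ffunE //.
Qed.

Lemma pc_split a c (P Q R D : set sq) :
  (forall u, P u -> D u \/ (Q u /\ R (shn a u))) ->
  (pc P (a + c) <= pc Q a * pc R c + pc D (a + c))%N.
Proof.
move=> h; rewrite /pc.
have sub : Lang (a + c) P \subset
    [set catf x.1 x.2 | x in finset.setX (Lang a Q) (Lang c R)] :|: Lang (a + c) D.
  apply/fintype.subsetP => w /inLang [u [Pu <-]]; rewrite inE.
  case: (h u Pu) => [Du|[Qu Ru]]; first by rewrite preLang ?orbT.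
  apply/orP; left; rewrite pre_cat; apply/imsetP.
  by exists (pre a u, pre c (shn a u)) => //; rewrite inE /= !preLang.
apply: (leq_trans (subset_leq_card sub)); apply: (leq_trans (leq_card_setU _ _)).
by rewrite leq_add2r; apply: (leq_trans (leq_imset_card _ _)); rewrite cardsX.
Qed.

Lemma pc_submult (P : set sq) a c : invS P -> (pc P (a + c) <= pc P a * pc P c)%N.
Proof.
move=> iP; have := @pc_split a c P P P set0.
have e : pc set0 (a + c) = 0%N.
  apply/eqP; rewrite cards_eq0; apply/eqP/setP => w; rewrite !inE.
  by case: asboolP => // -[u [[]]].
rewrite e addn0; apply => u Pu; right; split => //; exact: invS_shn.
Qed.

Lemma pc_det (D : set sq) N0 :
  (forall u v, D u -> D v -> agree N0 u v -> u = v) ->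
  forall N, (pc D N <= pc D N0)%N.
Proof.
move=> hD N; have [[u0 Du0]|nD] := pselect (exists u, D u); last first.
  suff -> : pc D N = 0%N by [].
  have -> : D = set0 by apply: funext => u; apply: propext; split => // Du; apply: nD; exists u.
  apply/eqP; rewrite cards_eq0; apply/eqP/setP => w; rewrite !inE.
  by case: asboolP => // -[u [[]]].
pose g (w : {ffun 'I_N0 -> A}) : {ffun 'I_N -> A} :=
  if pselect (exists u, D u /\ pre N0 u = w) is left H
  then pre N (proj1_sig (cid H)) else pre N u0.
have sub : Lang N D \subset g @: Lang N0 D.
  apply/fintype.subsetP => w /inLang [u [Du <-]]; apply/imsetP.
  exists (pre N0 u); first exact: preLang.
  rewrite /g; case: pselect => [H|[]]; last by exists u.
  case: (cid H) => v [Dv /pre_agree avu] /=.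
  by rewrite (hD _ _ Du Dv (agree_sym avu)).
by apply: (leq_trans (subset_leq_card sub)); exact: leq_imset_card.
Qed.

Definition upd (w : sq) j (a : A) : sq := fun k => if k == j then a else w k.

Lemma Dfin (P : set sq) m : closedS P ->
  exists N0, forall u v,
    (P u /\ pre m u \notin Lang m (der P)) ->
    (P v /\ pre m v \notin Lang m (der P)) -> agree N0 u v -> u = v.
Proof.
move=> cP; set D := fun u => P u /\ pre m u \notin Lang m (der P).
apply: contrapT => hn.
have hp : forall N, exists u v, D u /\ D v /\ agree N u v /\ u <> v.
  move=> N; apply: contrapT => hN; apply: hn; exists N => u v Du Dv auv.
  apply: contrapT => neq; apply: hN; by exists u, v.
pose G j (w : sq) := forall N, exists u v, D u /\ D v /\
  agree (maxn j N) u v /\ u <> v /\ agree j u w.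
have Gag j w w' : G j w -> agree j w w' -> G j w'.
  move=> Gw aw N; have [u [v [Du [Dv [a1 [neq a2]]]]]] := Gw N.
  by exists u, v; do 4!split => //; exact: agree_trans aw.
have Gst j w : (0 <= j)%N -> G j w -> exists v, agree j w v /\ G j.+1 v.
  move=> _ Gw; apply: contrapT => hno.
  have hNa : forall a : A, exists Na, ~ (exists u v, D u /\ D v /\
      agree (maxn j.+1 Na) u v /\ u <> v /\ agree j.+1 u (upd w j a)).
    move=> a; apply: contrapT => ha; apply: hno; exists (upd w j a); split.
      by move=> k kj; rewrite /upd (ltn_eqF kj).
    move=> N; apply: contrapT => hN; apply: ha; exists N; exact: hN.
  pose Nf a := proj1_sig (cid (hNa a)).
  pose Nm := (\max_(a : A) Nf a)%N.
  have [u [v [Du [Dv [a1 [neq a2]]]]]] := Gw (maxn j.+1 Nm).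
  have := proj2_sig (cid (hNa (u j))); rewrite -/(Nf (u j)) => hc; apply: hc.
  exists u, v; do 3!split => //.
    apply: agree_le a1; rewrite geq_max; apply/andP; split.
      by rewrite leq_max; apply/orP; right; rewrite leq_max leqnn.
    rewrite leq_max; apply/orP; right; rewrite leq_max; apply/orP; right.
    exact: leq_bigmax.
  split => // k; rewrite ltnS leq_eqVlt => /orP[/eqP ->|kj].
    by rewrite /upd eqxx.
  by rewrite /upd (ltn_eqF kj) a2.
have [u0 [_ [_ [_ [_ _]]]]] := hp 0%N.
have G0 : G 0%N u0.
  move=> N; have [u [v [Du [Dv [a1 neq]]]]] := hp N.
  exists u, v; split => //; split => //; split; first by rewrite max0n.
  by split => // k; rewrite ltn0.
have [w [_ Gw]] := konig Gag Gst G0.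
have Pw : P w.
  apply: cP => n; have [u [v [[Pu _] [_ [_ [_ a2]]]]]] := Gw n isT 0%N.
  by exists u; split => //; exact: agree_sym.
have dw : der P w.
  split => // -[n isn].
  have [u [v [[Pu _] [[Pv _] [a1 [neq a2]]]]]] := Gw n isT 0%N.
  rewrite maxn0 in a1.
  have eu := isn u Pu (agree_sym a2).
  have ev := isn v Pv (agree_trans (agree_sym a2) a1).
  by apply: neq; rewrite eu ev.
have [u [v [[Pu nu] [_ [_ [_ a2]]]]]] := Gw m isT 0%N.
move/pre_agree: a2 => a2.
by move: nu; rewrite a2 preLang.
Qed.

Lemma rec_bound (p : nat -> nat) r M m :
  (forall c, p (m + c) <= r * p c + M)%N ->
  forall j, (p (j * m) <= (M + p 0) * j.+1 * (maxn r 1) ^ j)%N.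
Proof.
move=> h; elim=> [|j IH]; first by rewrite mul0n expn0 !muln1 leq_addl.
rewrite mulSn; apply: (leq_trans (h _)).
have r1 : (r <= maxn r 1)%N by rewrite leq_maxl.
have R1 : (1 <= maxn r 1 ^ j.+1)%N by rewrite expn_gt0 leq_max orbT.
apply: (@leq_trans (maxn r 1 * ((M + p 0) * j.+1 * maxn r 1 ^ j) + (M + p 0))%N).
  apply: leq_add; last exact: leq_addr.
  exact: leq_mul.
rewrite expnS.
set K := (M + p 0)%N; set Rr := maxn r 1; set E := (Rr ^ j)%N.
have -> : (Rr * (K * j.+1 * E) = K * j.+1 * (Rr * E))%N by ring.
rewrite [(K * j.+2)%N]mulnS mulnDl addnC leq_add2r.
by rewrite -{1}(muln1 K) leq_mul2l -expnS R1 orbT.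
Qed.

Section Reals.
Variable R : realType.
Local Open Scope ring_scope.

Definition Gb (b : R) (P : set sq) := forall n, b ^+ n <= (pc P n)%:R.

Lemma bern (d : R) n : 0 <= d -> 1 + n%:R * d <= (1 + d) ^+ n.
Proof.
move=> d0; elim: n => [|n IH]; first by rewrite mul0r addr0 expr0.
rewrite exprS; apply: (@le_trans _ _ ((1 + d) * (1 + n%:R * d))); last first.
  by apply: ler_wpM2l => //; rewrite addr_ge0.
have n0 : 0 <= n%:R :> R by []. 
rewrite -natr1 mulrDl mul1r; nra.
Qed.

Lemma geo_beats (rho K : R) : 1 < rho -> 0 <= K ->
  exists j : nat, K * (j.+1)%:R < rho ^+ j.
Proof.
move=> r1 K0; set d := rho - 1.
have d0 : 0 < d by rewrite subr_gt0.
pose i := (Num.Def.archi_bound (3 * K / (d * d))).+1.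
have hi : 3 * K / (d * d) < i%:R.
  apply: (lt_le_trans (archi_boundP _)); last by rewrite ler_nat.
  by rewrite divr_ge0 ?mulr_ge0 // ltW.
have i1 : 1 <= i%:R :> R by rewrite ler1n.
have hi2 : 3 * K < i%:R * (d * d).
  by rewrite -ltr_pdivrMr ?mulr_gt0.
exists (i + i)%N; rewrite exprD.
have b := bern i (ltW d0).
have ed : 1 + d = rho by rewrite /d addrC subrK.
rewrite ed in b.
have e1 : 0 <= 1 + i%:R * d by rewrite addr_ge0 ?mulr_ge0 // ltW.
have e2 : (1 + i%:R * d) ^+ 2 <= rho ^+ i * rho ^+ i.
  rewrite expr2; apply: ler_pM => //.
rewrite -natr1 natrD.
have : K * (i%:R + i%:R + 1) < (1 + i%:R * d) ^+ 2.
  have h3 : 3 * K * i%:R < i%:R * (i%:R * (d * d)).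
    by rewrite mulrC ltr_pM2l // (lt_le_trans ltr01 i1).
  have h4 : K * (i%:R + i%:R + 1) <= 3 * K * i%:R by nra.
  have h5 : 0 <= i%:R * d by rewrite mulr_ge0 // ltW.
  rewrite expr2; nra.
move=> h; exact: lt_le_trans h e2.
Qed.


Lemma Gb_der b P : 1 < b -> closedS P -> invS P -> Gb b P -> Gb b (der P).
Proof.
move=> b1 cP iP G m; rewrite leNgt; apply/negP => hlt.
have [N0 hN0] := Dfin m cP.
pose D := fun u => P u /\ pre m u \notin Lang m (der P).
pose r := pc (der P) m; pose M := pc D N0.
have h : forall c, (pc P (m + c) <= r * pc P c + M)%N.
  move=> c; pose Q : set sq := fun u => is_true (pre m u \in Lang m (der P)).
  have := @pc_split m c P Q P D; move=> hs; apply: (leq_trans (hs _)).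
    move=> u Pu; case: (boolP (pre m u \in Lang m (der P))) => hq.
      by right; split => //; exact: invS_shn.
    by left.
  apply: leq_add; last by apply: pc_det => u v; exact: hN0.
  apply: leq_mul => //; apply: subset_leq_card.
  by apply/fintype.subsetP => w /inLang [u [Qu <-]]; exact: Qu.
move: hlt h; rewrite -/r; case: (posnP m) => [m0|mpos] hlt h.
  rewrite m0 in hlt h.
  have r0 : r = 0%N by move: hlt; rewrite expr0 ltrn1; case: (r).
  have [j hj] := geo_beats b1 (ler0n _ M).
  have hb := G j; have := h j; rewrite r0 mul0n add0n => hp.
  have : (M%:R : R) <= M%:R * (j.+1)%:R by rewrite ler_peMr // ler1n.
  move: hb; rewrite -(ler_nat R) in hp => hb hM.
  have := le_trans hb hp; rewrite leNgt => /negP; apply.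
  exact: le_lt_trans hM hj.
pose B := b ^+ m; pose R0 := maxn r 1.
have B1 : 1 < B by rewrite /B exprn_egt1 // -lt0n.
have R0pos : (0 < R0)%N by rewrite leq_max orbT.
have RB : (R0%:R : R) < B.
  have : (R0 = 1 \/ R0 = r)%N by rewrite /R0 /maxn; case: ifP; [left|right].
  by case=> ->.
pose K := (M + pc P 0)%N.
have rec := rec_bound h.
have rho1 : 1 < B / R0%:R by rewrite ltr_pdivlMr ?ltr0n // mul1r.
have [j hj] := geo_beats rho1 (ler0n _ K).
have hb : B ^+ j <= (pc P (j * m))%:R by rewrite /B -exprM mulnC; exact: G.
have := rec j; rewrite -(ler_nat R) !natrM natrX -/K -/R0 => hr.
have := le_trans hb hr; rewrite leNgt => /negP; apply.
rewrite expr_div_n in hj.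
have R0j : 0 < (R0%:R : R) ^+ j by rewrite exprn_gt0 // ltr0n.
by rewrite -ltr_pdivlMr.
Qed.

Lemma chain_max (T : Type) (I : eqType) (F : set (set T)) (g : I -> set T) (s : seq I) :
  (forall i, F (g i)) -> total_on F subset -> s <> [::] ->
  exists i, forall j, j \in s -> g j `<=` g i.
Proof.
move=> Fg tot; elim: s => [//|i s IH] _.
case: s IH => [|i' s] IH.
  by exists i => j; rewrite inE => /eqP ->.
have [//|k hk] := IH.
have [hik|hki] := tot _ _ (Fg i) (Fg k).
  exists k => j; rewrite inE => /orP[/eqP ->//|]; exact: hk.
exists i => j; rewrite inE => /orP[/eqP ->//|js].
exact: subset_trans (hk _ js) hki.
Qed.

Definition FS b (P : set sq) := closedS P /\ invS P /\ Gb b P.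

Lemma chain_FS b (Om : set sq) (C : set (set sq)) :
  C `<=` [set Aa | Aa `<=` Om /\ FS b (Om `\` Aa)] ->
  total_on C subset -> (exists Aa, C Aa) ->
  FS b (Om `\` \bigcup_(Aa in C) Aa).
Proof.
move=> CP tot [Aa1 CA1].
have inI u : (Om `\` \bigcup_(Aa in C) Aa) u <-> forall Aa, C Aa -> (Om `\` Aa) u.
  split=> [[Ou nu] Aa CA|h]; first by split => // hA; apply: nu; exists Aa.
  by split; [exact: (h _ CA1).1|move=> [Aa CA hA]; exact: (h _ CA).2].
split.
  move=> u h; apply/inI => Aa CA; have [cA _] := (CP _ CA).2.
  apply: cA => n; have [v [Iv auv]] := h n.
  by exists v; split => //; move/inI: Iv; apply.
split.
  move=> u /inI h; apply/inI => Aa CA; have [_ [iA _]] := (CP _ CA).2.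
  exact: iA (h _ CA).
move=> n.
pose Pk := fun k => `[< exists Aa, C Aa /\ pc (Om `\` Aa) n = k >].
have exP : exists k, Pk k by exists (pc (Om `\` Aa1) n); apply/asboolP; exists Aa1.
have [k /asboolP [Aa0 [CA0 ek]] kmin] := find_ex_minn exP.
have sub : forall Aa, C Aa -> Lang n (Om `\` Aa0) \subset Lang n (Om `\` Aa).
  move=> Aa CA; have [h|h] := tot _ _ CA CA0.
    by apply: (Lang_sub n) => u [Ou nu]; split => // /h.
  have s1 : Lang n (Om `\` Aa) \subset Lang n (Om `\` Aa0).
    by apply: (Lang_sub n) => u [Ou nu]; split => // /h.
  have s2 : (#|Lang n (Om `\` Aa0)| <= #|Lang n (Om `\` Aa)|)%N.
    rewrite -/(pc _ n) ek; apply: kmin; apply/asboolP; by exists Aa.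
  have /eqP e : Lang n (Om `\` Aa) == Lang n (Om `\` Aa0) by rewrite eqEcard s1 s2.
  by rewrite e subxx.
have GA : b ^+ n <= (pc (Om `\` Aa0) n)%:R by have [_ [_ G0]] := (CP _ CA0).2; exact: G0.
apply: (le_trans GA); rewrite ler_nat; apply: subset_leq_card.
apply/fintype.subsetP => w /inLang [u0 [Iu0 <-]].
pose Gk j v := forall Aa, C Aa -> exists v', (Om `\` Aa) v' /\ agree j v v'.
have Gag j v v2 : Gk j v -> agree j v v2 -> Gk j v2.
  move=> Gv a2 Aa CA; have [v' [Iv' av]] := Gv Aa CA.
  by exists v'; split => //; exact: agree_trans (agree_sym a2) av.
have G0 : Gk n u0.
  move=> Aa CA; have /fintype.subsetP /(_ (pre n u0)) := sub Aa CA.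
  move=> /(_ (preLang n Iu0)) /inLang [v' [Iv' ev]].
  by exists v'; split => //; apply/pre_agree.
have Gst j v : (n <= j)%N -> Gk j v -> exists v1, agree j v v1 /\ Gk j.+1 v1.
  move=> _ Gv; apply: contrapT => hno.
  have hA : forall a : A, exists Aa, C Aa /\
      ~ exists v', (Om `\` Aa) v' /\ agree j.+1 (upd v j a) v'.
    move=> a; apply: contrapT => ha; apply: hno; exists (upd v j a); split.
      by move=> kk kj; rewrite /upd (ltn_eqF kj).
    move=> Aa CA; apply: contrapT => hv; apply: ha; by exists Aa.
  pose Af a := proj1_sig (cid (hA a)).
  have CAf a : C (Af a) by rewrite /Af; case: (cid (hA a)) => ? [].
  have ne : enum A <> [::].
    by move=> e; have := mem_enum A (u0 0%N); rewrite e.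
  have [as1 has] := chain_max CAf tot ne.
  have [v' [[Ov' nv'] av]] := Gv _ (CAf as1).
  have := proj2_sig (cid (hA (v' j))); rewrite -/(Af (v' j)) => -[_]; apply.
  exists v'; split.
    by split => // hv; apply: nv'; apply: (has (v' j)) => //; rewrite mem_enum.
  move=> kk; rewrite ltnS leq_eqVlt => /orP[/eqP ->|kj].
    by rewrite /upd eqxx.
  by rewrite /upd (ltn_eqF kj) av.
have [w' [a0 Gw']] := konig Gag Gst G0.
have Iw' : (Om `\` \bigcup_(Aa in C) Aa) w'.
  apply/inI => Aa CA; have [cA _] := (CP _ CA).2.
  apply: cA => N; have [v [Iv av]] := Gw' (N + n)%N (leq_addl _ _) Aa CA.
  by exists v; split => //; apply: agree_le av; exact: leq_addr.
have -> : pre n u0 = pre n w' by apply/pre_agree.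
exact: preLang.
Qed.

Theorem scattered_noG b (Om : set sq) : 1 < b -> closedS Om -> invS Om ->
  (forall Ps : set sq, Ps `<=` Om -> (exists u, Ps u) -> exists u, Ps u /\ iso Ps u) ->
  ~ Gb b Om.
Proof.
move=> b1 cOm iOm scat GOm.
pose PP := [set Aa : set sq | Aa `<=` Om /\ FS b (Om `\` Aa)].
have hz : forall F, F `<=` PP -> total_on F subset -> PP (\bigcup_(X in F) X).
  move=> F FP tot; split.
    by move=> u [Aa FA Au]; exact: (FP _ FA).1 _ Au.
  case: (pselect (exists Aa, F Aa)) => [ex|nex]; first exact: chain_FS.
  have -> : \bigcup_(X in F) X = set0.
    by apply/seteqP; split => // u [Aa FA _]; apply: nex; exists Aa.
  by rewrite setD0; split.
have [Aa [[AOm [cP [iP GP]]] amax]] := Zorn_bigcup hz.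
set P0 := Om `\` Aa in cP iP GP.
have [u Pu] : exists u, P0 u.
  have := GP 0%N; rewrite expr0 ler1n => /card_gt0P [w /inLang [u [Pu _]]].
  by exists u.
have [u' [Pu' iu']] := scat P0 (fun v h => h.1) (ex_intro _ u Pu).
apply: (amax (Om `\` der P0)).
  split.
    move=> v Av; split; first exact: AOm.
    by move=> [[_ nA] _].
  move=> sub.
  have : (Om `\` der P0) u' by split; [exact: Pu'.1 | move=> [_ []]; exact: iu'].
  by move=> /sub; exact: (Pu'.2).
split; first by move=> v [].
have -> : Om `\` (Om `\` der P0) = der P0.
  apply/seteqP; split => v.
    move=> [Ov nv]; apply: contrapT => nd; apply: nv; by split.
  move=> dv; have [[Ov _] _] := dv; split => //; by move=> [].
split; first exact: der_closed.
split; first exact: der_inv.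
exact: Gb_der.
Qed.

Lemma pc_pow (P : set sq) a q : invS P -> (pc P (q * a) <= pc P a ^ q)%N.
Proof.
move=> iP; elim: q => [|q IH].
  by rewrite mul0n expn0 /pc; apply: (leq_trans (max_card _)); rewrite card_ffun card_ord expn0.
rewrite mulSn expnS; apply: (leq_trans (pc_submult _ _ iP)).
exact: leq_mul.
Qed.

Lemma noG_bound b (P : set sq) : 1 < b -> invS P -> ~ Gb b P ->
  exists C : R, 0 < C /\ forall n, (pc P n)%:R <= C * b ^+ n.
Proof.
move=> b1 iP nG.
have [n0 hn0] : exists n0, (pc P n0)%:R < b ^+ n0.
  apply: contrapT => h; apply: nG => n; rewrite leNgt; apply/negP => hn.
  by apply: h; exists n.
pose C : R := 1 + \sum_(r < n0) (pc P r)%:R.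
have C1 : 1 <= C by rewrite lerDl sumr_ge0.
exists C; split; first exact: lt_le_trans ltr01 C1.
have b0 : 0 <= b by apply: ltW; exact: lt_trans ltr01 b1.
move=> n; case: (posnP n0) => [n00|n0pos].
  move: hn0; rewrite n00 expr0 ltrn1 ltnS leqn0 => /eqP p0.
  have := pc_submult 0 n iP; rewrite add0n p0 mul0n leqn0 => /eqP ->.
  by rewrite mulr_ge0 // ?exprn_ge0 // ltW // (lt_le_trans ltr01 C1).
rewrite (divn_eq n n0); set q := (n %/ n0)%N; set r := (n %% n0)%N.
have rlt : (r < n0)%N by rewrite ltn_mod.
have h1 := pc_submult (q * n0) r iP.
have h2 := pc_pow n0 q iP.
have hr : (pc P r)%:R <= C.
  have h : (pc P r)%:R <= \sum_(r0 < n0) (pc P r0)%:R :> R.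
    by rewrite (bigD1 (Ordinal rlt)) //= lerDl sumr_ge0.
  by apply: (le_trans h); rewrite /C lerDr.
apply: (le_trans (y := ((pc P n0) ^ q * pc P r)%:R)).
  by rewrite ler_nat; apply: (leq_trans h1); rewrite leq_mul2r h2 orbT.
have C0 : 0 <= C by exact: le_trans ler01 C1.
rewrite natrM natrX; apply: (le_trans (y := b ^+ (q * n0) * C)).
  apply: ler_pM; [exact: exprn_ge0 | exact: ler0n | | exact: hr].
  rewrite mulnC exprM; apply: lerXn2r; rewrite ?qualifE /= ?exprn_ge0 //.
  exact: ltW.
rewrite exprD mulrC; apply: ler_wpM2l => //; apply: ler_peMr; first exact: exprn_ge0.
by apply: exprn_ege1; exact: ltW.
Qed.
End Reals.
End Subshift.

Section Dcc.
Variable X : topologicalType.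
Hypothesis hnoeth : noetherian X.

Lemma dcc_stab (F : nat -> set X) : (forall n, closed (F n)) ->
  (forall n, F n.+1 `<=` F n) -> exists m, forall n, (m <= n)%N -> F n = F m.
Proof. exact: hnoeth. Qed.

Lemma dcc_min (K : set (set X)) : (forall C, K C -> closed C) -> (exists C, K C) ->
  exists C, K C /\ forall C', K C' -> C' `<=` C -> C' = C.
Proof.
move=> Kc [C0 KC0]; apply: contrapT => hno.
have hnext : forall C, K C -> exists C', K C' /\ C' `<=` C /\ C' <> C.
  move=> C KC; apply: contrapT => h; apply: hno; exists C; split => // C' KC' sub.
  apply: contrapT => ne; apply: h; by exists C'.
pose nx C := if pselect (exists C', K C' /\ C' `<=` C /\ C' <> C) is left H
  then proj1_sig (cid H) else C.
pose Fs := fix Fs n := if n is n'.+1 then nx (Fs n') else C0.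
have KF : forall n, K (Fs n).
  elim=> [//|n IH] /=; rewrite /nx; case: pselect => [H|[]]; last exact: hnext.
  exact: (proj2_sig (cid H)).1.
have dec : forall n, Fs n.+1 `<=` Fs n /\ Fs n.+1 <> Fs n.
  move=> n /=; rewrite /nx; case: pselect => [H|[]]; last exact: hnext.
  exact: (proj2_sig (cid H)).2.
have [m hm] := hnoeth (fun n => Kc _ (KF n)) (fun n => (dec n).1).
by apply: (dec m).2; apply: hm.
Qed.

End Dcc.

Section XSide.
Variable X : topologicalType.
Variable f : X -> X.
Hypothesis hf : continuous f.
Hypothesis hnoeth : noetherian X.
Variable U : seq (set X).
Hypothesis hU : finite_open_cover U.

Local Notation m := (size U).
Local Notation A := {set 'I_m}.

Definition typ (y : X) : A := [set i : 'I_m | `[< nth set0 U i y >]].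
Definition itin x : nat -> A := fun k => typ (iter k f x).
Definition Om : set (nat -> A) := [set u | forall n, exists x, agree n u (itin x)].

Lemma itin_Om x : Om (itin x).
Proof. by move=> n; exists x. Qed.

Lemma Om_closed : closedS Om.
Proof.
move=> u h n; have [v [Ov auv]] := h n; have [x avx] := Ov n.
by exists x; exact: agree_trans auv avx.
Qed.

Lemma itin_f x k : itin (f x) k = itin x k.+1.
Proof. by rewrite /itin iterSr. Qed.

Lemma Om_inv : invS Om.
Proof.
move=> u Ou n; have [x ax] := Ou n.+1; exists (f x) => k kn.
by rewrite itin_f; apply: ax.
Qed.

Lemma iter_cont k : continuous (iter k f).
Proof.
elim: k => [|k IH] /=; first by move=> x.
by move=> x; apply: continuous_comp; [exact: IH | exact: hf].
Qed.

Definition lc (C : set X) := exists O F, open O /\ closed F /\ C = O `&` F.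

Lemma lcI C D : lc C -> lc D -> lc (C `&` D).
Proof.
move=> [Oa [Fa [oa [c1 ->]]]] [Ob [Fb [ob [c2 ->]]]].
exists (Oa `&` Ob), (Fa `&` Fb); split; first exact: openI.
split; first exact: closedI.
by rewrite setIACA.
Qed.

Lemma lcT : lc setT.
Proof. by exists setT, setT; split; [exact: openT|split; [exact: closedT|rewrite setIT]]. Qed.

Lemma lc_pre g C : continuous g -> lc C -> lc (g @^-1` C).
Proof.
move=> cg [Oo [Ff [oO [cF ->]]]]; exists (g @^-1` Oo), (g @^-1` Ff); split.
  by move/continuousP: cg; apply.
split; first by move/continuous_closedP: cg; apply.
by rewrite preimage_setI.
Qed.


Lemma open_nth i : (i < m)%N -> open (nth set0 U i).
Proof. by move=> im; apply: hU.1. Qed.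

Lemma open_fin (s : seq 'I_m) : open [set y | forall i, i \in s -> nth set0 U i y].
Proof.
elim: s => [|i s IH].
  have -> : [set y | forall i : 'I_m, i \in [::] -> nth set0 U i y] = setT.
    by apply/seteqP; split => // y _ i; rewrite in_nil.
  exact: openT.
have -> : [set y | forall j : 'I_m, j \in i :: s -> nth set0 U j y] =
    nth set0 U i `&` [set y | forall j : 'I_m, j \in s -> nth set0 U j y].
  apply/seteqP; split => y.
    by move=> h; split; [apply: h; rewrite inE eqxx | move=> j js; apply: h; rewrite inE js orbT].
  by move=> [h1 h2] j; rewrite inE => /orP[/eqP ->//|]; exact: h2.
by apply: openI => //; apply: open_nth.
Qed.

Definition fib (T : A) := [set y | typ y = T].

Lemma lc_fib T : lc (fib T).
Proof.
exists [set y | forall i, i \in enum T -> nth set0 U i y].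
exists (\bigcap_(i in [set i : 'I_m | i \notin T]) ~` nth set0 U i).
split; first exact: open_fin.
split.
  by apply: closed_bigI => i _; apply: open_closedC; apply: open_nth.
apply/seteqP; split => y.
  rewrite /fib /= => <-; split.
    by move=> i; rewrite mem_enum inE => /asboolP.
  by move=> i /= ni hy; move: ni; rewrite inE; apply/negP/negPn; apply/asboolP.
move=> [h1 h2]; rewrite /fib /=; apply/setP => i; rewrite inE.
apply/asboolP/idP => [hy|iT].
  by apply: contrapT => /negP ni; exact: h2 i ni hy.
by apply: h1; rewrite mem_enum.
Qed.

Definition Cyl n u := [set x | agree n u (itin x)].

Lemma Cyl_S n u : Cyl n.+1 u = Cyl n u `&` (iter n f) @^-1` fib (u n).
Proof.
apply/seteqP; split => x.
  move=> h; split; first by move=> k kn; apply: h; exact: ltnW.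
  by rewrite /preimage /fib /= (h n (ltnSn n)).
move=> [h1 h2] k; rewrite ltnS leq_eqVlt => /orP[/eqP ->|kn]; last exact: h1.
by rewrite /itin h2.
Qed.

Lemma lc_Cyl n u : lc (Cyl n u).
Proof.
elim: n => [|n IH].
  have -> : Cyl 0 u = setT by apply/seteqP; split => // x _ k; rewrite ltn0.
  exact: lcT.
by rewrite Cyl_S; apply: lcI => //; apply: lc_pre; [exact: iter_cont|exact: lc_fib].
Qed.

Lemma Cyl_agree n u v : agree n u v -> Cyl n u = Cyl n v.
Proof.
move=> a; apply/seteqP; split => x h; [exact: agree_trans (agree_sym a) h|exact: agree_trans a h].
Qed.

Lemma Cyl_dec n u : Cyl n.+1 u `<=` Cyl n u.
Proof. by rewrite Cyl_S => x []. Qed.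

Lemma Cyl_ne n u : Om u -> exists x, Cyl n u x.
Proof. by move=> Ou; have [x ax] := Ou n; exists x. Qed.

Lemma lc_disj (C1 C2 : set X) : lc C1 -> lc C2 -> (exists x, C1 x) ->
  closure C1 = closure C2 -> (exists y, C1 y /\ C2 y).
Proof.
move=> [Oa [Fa [oa [c1 e1]]]] _ [x C1x] ecl.
have xcl : closure C2 x by rewrite -ecl; exact: subset_closure.
have nx : nbhs x Oa by apply: open_nbhs_nbhs; split => //; move: C1x; rewrite e1 => -[].
have [y [C2y Oay]] := xcl _ nx.
exists y; split => //; rewrite e1; split => //.
have : closure C1 y by rewrite ecl; exact: subset_closure.
have sub : C1 `<=` Fa by rewrite e1 => z [].
by move/(closureS sub); move/closure_id: c1 => <-.
Qed.


Definition Kc n u := closure (Cyl n u).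

Lemma Cyl_mono n n' u : (n <= n')%N -> Cyl n' u `<=` Cyl n u.
Proof. by move=> le x h; exact: agree_le le h. Qed.

Lemma Kc_mono n n' u : (n <= n')%N -> Kc n' u `<=` Kc n u.
Proof. by move=> le; apply: closureS; exact: Cyl_mono. Qed.

Lemma Kc_stab u : exists n0, forall n, (n0 <= n)%N -> Kc n u = Kc n0 u.
Proof.
apply: (dcc_stab hnoeth) => n; first exact: closed_closure.
exact: Kc_mono.
Qed.

Definition Kinf u := [set x | forall n, Kc n u x].

Lemma Kinf_eq u n0 : (forall n, (n0 <= n)%N -> Kc n u = Kc n0 u) ->
  forall N, (n0 <= N)%N -> Kinf u = Kc N u.
Proof.
move=> hs N hN; apply/seteqP; split => x; first by apply.
move=> h n; case: (leqP n n0) => le.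
  by apply: (Kc_mono le); rewrite -(hs N hN).
by rewrite (hs n (ltnW le)) -(hs N hN).
Qed.

Lemma Om_scattered (Ps : set (nat -> A)) : Ps `<=` Om -> (exists u, Ps u) ->
  exists u, Ps u /\ iso Ps u.
Proof.
move=> PO [u0 Pu0].
have [C [[u [Pu eC]] Cmin]] :
    exists C, (exists u, Ps u /\ C = Kinf u) /\
      forall C', (exists v, Ps v /\ C' = Kinf v) -> C' `<=` C -> C' = C.
  apply: (dcc_min hnoeth).
    move=> C [v [_ ->]]; have [n0 h] := Kc_stab v.
    rewrite (Kinf_eq h (leqnn n0)); exact: closed_closure.
  by exists (Kinf u0), u0.
exists u; split => //.
have [n0 hn0] := Kc_stab u.
exists n0 => v Pv auv.
have [n1 hn1] := Kc_stab v.
have sub : Kinf v `<=` Kinf u.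
  rewrite (Kinf_eq hn0 (leqnn n0)) /Kc (Cyl_agree auv).
  by move=> x; apply.
have ev : Kinf v = Kinf u.
  by rewrite -eC; apply: Cmin; [exists v | rewrite eC].
apply: funext => k; apply: contrapT => nk.
pose N := maxn (maxn n0 n1) k.+1.
have hN0 : (n0 <= N)%N by rewrite /N !leq_max leqnn.
have hN1 : (n1 <= N)%N by rewrite /N !leq_max leqnn orbT.
have hk : (k < N)%N by rewrite /N leq_max leqnn orbT.
have e : closure (Cyl N u) = closure (Cyl N v).
  by rewrite -/(Kc N u) -/(Kc N v) -(Kinf_eq hn0 hN0) -(Kinf_eq hn1 hN1) ev.
have [y [y1 y2]] := lc_disj (lc_Cyl N u) (lc_Cyl N v) (Cyl_ne N (PO _ Pu)) e.
by apply: nk; rewrite (y1 k hk) (y2 k hk).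
Qed.


Lemma nth_join (P Q : seq (set X)) i j : (i < size P)%N -> (j < size Q)%N ->
  nth set0 (cover_join P Q) (i * size Q + j) = nth set0 P i `&` nth set0 Q j.
Proof.
rewrite /cover_join; elim: P i => [//|a P IH] [|i] iP jQ.
  by rewrite mul0n add0n allpairs_cons nth_cat size_map jQ (nth_map set0).
rewrite allpairs_cons nth_cat size_map mulSn -addnA.
rewrite ltnNge leq_addr /= addKn; exact: IH.
Qed.

Definition Cn s L := foldr (@cover_join X) [:: [set: X]]
  [seq cover_preimage (iter k f) U | k <- iota s L].

Lemma Cn_S s L : Cn s L.+1 = cover_join (cover_preimage (iter s f) U) (Cn s.+1 L).
Proof. by []. Qed.

Lemma size_Cn s L : size (Cn s L) = (m ^ L)%N.
Proof.
elim: L s => [//|L IH] s; rewrite Cn_S /cover_join size_allpairs IH.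
by rewrite /cover_preimage size_map expnS.
Qed.

Fixpoint jdx s L (c : nat -> nat) : nat :=
  if L is L'.+1 then (c s * m ^ L' + jdx s.+1 L' c)%N else 0%N.

Lemma jdx_lt s L c : (forall k, c k < m)%N -> (jdx s L c < m ^ L)%N.
Proof.
move=> hc; elim: L s => [//|L IH] s /=.
apply: (@leq_trans (c s * m ^ L + m ^ L)%N); first by rewrite ltn_add2l IH.
rewrite -mulSnr expnS; apply: leq_mul => //; exact: hc.
Qed.

Lemma jdx_ext s L c c' : (forall k, (s <= k < s + L)%N -> c k = c' k) ->
  jdx s L c = jdx s L c'.
Proof.
elim: L s => [//|L IH] s h /=.
rewrite h ?leqnn ?addnS ?ltnS ?leq_addr //; congr (_ + _)%N.
apply: IH => k /andP[sk ks]; apply: h; rewrite ltnW //=.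
by rewrite addnS -addSn.
Qed.

Lemma Cn_mem s L c x : (forall k, c k < m)%N ->
  (forall k, (s <= k < s + L)%N -> nth set0 U (c k) (iter k f x)) ->
  nth set0 (Cn s L) (jdx s L c) x.
Proof.
move=> hc; elim: L s => [|L IH] s h /=; first by [].
rewrite Cn_S -(size_Cn s.+1 L) nth_join; last 2 first.
- by rewrite /cover_preimage size_map.
- by rewrite size_Cn jdx_lt.
split.
  rewrite /cover_preimage (nth_map set0) //; apply: h.
  by rewrite leqnn addnS ltnS leq_addr.
apply: IH => k /andP[sk ks]; apply: h; rewrite ltnW //=.
by rewrite addnS -addSn.
Qed.


Definition ch (T : A) : nat := if [pick i in T] is Some i then val i else 0%N.

Lemma typ_ne y : exists i : 'I_m, i \in typ y.
Proof.
have : [set: X] y by [].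
rewrite -hU.2 => -[i /= im hy].
by exists (Ordinal im); rewrite inE; apply/asboolP.
Qed.

Lemma ch_typ y : (ch (typ y) < m)%N /\ nth set0 U (ch (typ y)) y.
Proof.
rewrite /ch; case: pickP => [i hi|h]; last first.
  by have [i hi] := typ_ne y; move: (h i); rewrite hi.
by split; [exact: ltn_ord | move: hi; rewrite inE => /asboolP].
Qed.

Definition idx n x := jdx 0 n (fun k => ch (itin x k)).

Definition wget n (w : {ffun 'I_n -> A}) k : A := oapp w (finset.set0) (insub k).

Definition idxw n (w : {ffun 'I_n -> A}) := jdx 0 n (fun k => ch (wget w k)).

Lemma idx_w n x : idx n x = idxw (pre n (itin x)).
Proof.
apply: jdx_ext => k /andP[_ kn]; rewrite /wget insubT /= ffunE //.
Qed.

Lemma idx_lt n x : (idx n x < size (cover_n f U n))%N.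
Proof.
by rewrite -/(Cn 0 n) size_Cn jdx_lt // => k; exact: (ch_typ _).1.
Qed.

Lemma idx_mem n x : nth set0 (cover_n f U n) (idx n x) x.
Proof.
rewrite -/(Cn 0 n); apply: Cn_mem => k; first exact: (ch_typ _).1.
by move=> _; exact: (ch_typ _).2.
Qed.

Lemma bigmin_seq_le (I : eqType) (r : seq I) (P : pred I) (F : I -> nat) x0 i0 :
  i0 \in r -> P i0 -> (\big[minn/x0]_(i <- r | P i) F i <= F i0)%N.
Proof.
elim: r => [//|a r IH]; rewrite inE big_cons => /orP[/eqP ->|ir] Pi.
  by rewrite Pi geq_minl.
case: ifP => _; last exact: IH.
by apply: leq_trans (geq_minr _ _) (IH ir Pi).
Qed.

Lemma Ncov_le n : (Ncov (cover_n f U n) <= pc Om n)%N.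
Proof.
set cov := cover_n f U n.
pose I0 : {set 'I_(size cov)} := finset (fun i : 'I_(size cov) => `[< exists x, val i = idx n x >]).

apply: (@leq_trans #|I0|).
  rewrite /Ncov; apply: bigmin_seq_le; first exact: mem_index_enum.
  apply/asboolP; apply/seteqP; split => // x _.
  exists (Ordinal (idx_lt n x)); last exact: idx_mem.
  by rewrite /= inE; apply/asboolP; exists x.
rewrite /pc; have -> : #|Lang n Om| = size (map (@idxw n) (enum (Lang n Om))) by rewrite size_map cardE.
have -> : #|I0| = size (map val (enum I0)) by rewrite size_map cardE.
apply: uniq_leq_size; first by rewrite map_inj_uniq ?enum_uniq //; exact: val_inj.
move=> j /mapP [i]; rewrite mem_enum inE => /asboolP [x ->] ->.
rewrite idx_w; apply/mapP; exists (pre n (itin x)) => //.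
by rewrite mem_enum; apply: preLang; exact: itin_Om.
Qed.

End XSide.

Local Open Scope ring_scope.

Lemma part1 (R : realType) (X : topologicalType) (f : X -> X)
  (hnoeth : noetherian X) (hf : continuous f) (U : seq (set X)) :
  finite_open_cover U -> forall eps : R, 0 < eps ->
  exists C : R, 0 < C /\ forall n : nat, (Ncov (cover_n f U n))%:R <= C * (1 + eps) ^+ n.
Proof.
move=> hU eps e0.
have b1 : 1 < 1 + eps by rewrite ltrDl.
have nG : ~ Gb (1 + eps) (Om f (U:=U)).
  apply: scattered_noG => //; [exact: Om_closed | exact: Om_inv |].
  by move=> Ps PO ne; apply: (Om_scattered hf hnoeth hU PO ne).
have [C [C0 hC]] := noG_bound b1 (@Om_inv _ f U) nG.
exists C; split => // n; apply: le_trans (hC n); rewrite ler_nat.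
exact: Ncov_le.
Qed.

Lemma foc_triv (X : topologicalType) : finite_open_cover [:: [set: X]].
Proof.
split; first by case=> [_|//]; exact: openT.
by apply/seteqP; split => // x _; exists 0%N.
Qed.

Lemma rate0 (R : realType) (X : topologicalType) (f : X -> X)
  (hnoeth : noetherian X) (hf : continuous f) (U : seq (set X)) :
  finite_open_cover U ->
  (fun n : nat => (ln (Ncov (cover_n f U n))%:R / n%:R : R)) @ \oo --> 0.
Proof.
move=> hU; apply/cvgrPdist_le => e e0.
have e20 : 0 < e / 2 by rewrite divr_gt0.
have b1 : 1 < expR (e / 2) by rewrite expR_gt1.
have ep : 0 < expR (e / 2) - 1 by rewrite subr_gt0.
have [C [C0 hC]] := part1 hnoeth hf hU ep.
rewrite addrC subrK in hC.
set C' := C + 1.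
have C'1 : 1 <= C' by rewrite lerDr ltW.
have C'0 : 0 < C' by exact: lt_le_trans ltr01 C'1.
near=> n.
have n0 : 0 < n%:R :> R by rewrite ltr0n; near: n; exact: nbhs_infty_gt.
have nb : 2 * ln C' / e <= n%:R :> R by near: n; exact: nbhs_infty_ger.
set N := Ncov (cover_n f U n).
have lnN0 : 0 <= ln (N%:R : R).
  case: (posnP N) => [->|Np]; first by rewrite ln0.
  by apply: ln_ge0; rewrite ler1n.
have an0 : 0 <= ln (N%:R : R) / n%:R by rewrite divr_ge0 // ltW.
rewrite sub0r normrN ger0_norm // ler_pdivrMr //.
have hlnN : ln (N%:R : R) <= ln C' + e / 2 * n%:R.
  case: (posnP N) => [->|Np].
    rewrite ln0 //; apply: addr_ge0; [exact: ln_ge0 | by rewrite mulr_ge0 // ltW].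
  have hN : (N%:R : R) <= C' * expR (e / 2) ^+ n.
    apply: (le_trans (hC n)); apply: ler_wpM2r; first by rewrite exprn_ge0 // expR_ge0.
    by rewrite lerDl.
  have := hN; rewrite -ler_ln ?qualifE /= ?ltr0n // ?mulr_gt0 ?exprn_gt0 ?expR_gt0 //.
  rewrite lnM ?qualifE /= ?exprn_gt0 ?expR_gt0 // lnXn ?expR_gt0 // expRK.
  by rewrite mulr_natr.
apply: (le_trans hlnN).
have : ln C' <= e / 2 * n%:R.
  by move: nb; rewrite ler_pdivrMr // => h; nra.
nra.
Unshelve. all: end_near.
Qed.

Theorem theorem3p1 (R : realType) (X : topologicalType) (f : X -> X)
  (hqc : quasi_compact X) (hnoeth : noetherian X) (hf : continuous f) :
  (forall U : seq (set X), finite_open_cover U ->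
     forall eps : R, 0 < eps ->
       exists C : R, 0 < C /\
         forall n : nat, (Ncov (cover_n f U n))%:R <= C * (1 + eps) ^+ n)
  /\ htop R f = (0 : R)%:E.
Proof.
split; first by move=> U hU eps e0; exact: part1.
rewrite /htop.
have -> : [set limn (fun n : nat => ((ln (Ncov (cover_n f U n))%:R : R) / n%:R)%:E)
            | U in [set U | finite_open_cover U]] = [set (0 : R)%:E].
  apply/seteqP; split => x.
    move=> [U hU <-] /=.
    have hc := rate0 (R:=R) hnoeth hf hU.
    have hcv : cvgn (fun n => (ln (Ncov (cover_n f U n))%:R / n%:R : R)).
      exact: cvgP hc.
    have := EFin_lim hcv; rewrite /comp => ->.
    by rewrite (cvg_lim _ hc).
  move=> -> /=; exists [:: [set: X]]; first exact: foc_triv.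
  have hc := rate0 (R:=R) hnoeth hf (foc_triv X).
  have hcv : cvgn (fun n => (ln (Ncov (cover_n f [:: [set: X]] n))%:R / n%:R : R)).
    exact: cvgP hc.
  have := EFin_lim hcv; rewrite /comp => ->.
  by rewrite (cvg_lim _ hc).
exact: ereal_sup1.
Qed.
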